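(* Let $\mathcal{C}$ be an essentially small symmetric monoidal category with images, which is concrete with concrete images. Suppose $F\in\mathsf{Pmod}(\mathcal{C})$ is $S=\{s_1<\cdots<s_n\}$-constructible and let $\rho=\frac14\min_{1<i\le n}(s_i-s_{i-1})$. Then for any $G\in\mathsf{Pmod}(\mathcal{C})$ with $\varepsilon=d_I(F,G)<\rho$, there is a morphism $\nabla^\varepsilon(F_A)\to G_A$ in $\mathsf{PDgm}(A(\mathcal{C}))$.
   Context: $(\mathcal{C},\Box)$ is an essentially small symmetric monoidal category with unit object $e$. ''With images'': every morphism $f:a\to b$ factors as $f=h\circ g$ with $h:z\to b$ a monomorphism, universally among such factorizations; $\operatorname{im} f$ denotes $z$. ''Concrete with concrete images'': $\mathcal{C}$ embeds into $\mathsf{Set}$ and the image of a morphism corresponds to the set-theoretic image. A persistence module is a functor $F:(\mathbb{R},\le)\to\mathcal{C}$. For finite $S=\{s_1<\dots<s_n\}$, $F$ is $S$-constructible if $F(p\le q)$ is the identity on $e$ for $p\le q<s_1$, an isomorphism for $s_i\le p\le q<s_{i+1}$, and an isomorphism for $s_n\le p\le q$. $\mathsf{Pmod}(\mathcal{C})$ is the category of constructible persistence modules (constructible w.r.t. some finite $S$) and natural transformations. Interleaving distance: for $\varepsilon\in\mathbb{R}$, $\Delta^\varepsilon(F)=F\circ\mathsf{Shift}^\varepsilon$ where $\mathsf{Shift}^\varepsilon(r)=r+\varepsilon$; for $\varepsilon\ge0$, $\sigma^\varepsilon_F:F\to\Delta^\varepsilon F$ has components $F(r\le r+\varepsilon)$.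 $F,G$ are $\varepsilon$-interleaved if there are morphisms $\phi:F\to\Delta^\varepsilon G$, $\psi:G\to\Delta^\varepsilon F$ with $\Delta^\varepsilon(\psi)\circ\phi=\sigma^{2\varepsilon}_F$ and $\Delta^\varepsilon(\phi)\circ\psi=\sigma^{2\varepsilon}_G$. $d_I(F,G)$ is the minimum $\varepsilon\ge0$ for which they are $\varepsilon$-interleaved ($\infty$ if none). $\mathsf{Dgm}$ is the poset of intervals $[q,r)$, $q<r$, and $[q,\infty)$, ordered by containment. $I(\mathcal{C})$ is the commutative monoid of isomorphism classes under $[a]+[b]=[a\Box b]$, $A(\mathcal{C})$ its group completion, with partial order $x\preceq y$ iff $y-x\in I(\mathcal{C})$ (translation invariant). A persistence diagram valued in $A(\mathcal{C})$ is a map $Y:\mathsf{Dgm}\to A(\mathcal{C})$ that is nonzero only on intervals $[t_i,t_j)$, $[t_i,\infty)$ for some finite set $\{t_1<\dots<t_m\}$. $\mathsf{PDgm}(A(\mathcal{C}))$ is the poset of such diagrams where there is a morphism $Y_1\to Y_2$ iff $\sum_{J\supseteq I}Y_1(J)\preceq\sum_{J\supseteq I}Y_2(J)$ for every $I\in\mathsf{Dgm}$ with $Y_1(I)\neq 0$. For $\varepsilon\ge0$, $\mathsf{Grow}^\varepsilon$ sends $[p,q)\mapsto[p-\varepsilon,q+\varepsilon)$, $[p,\infty)\mapsto[p-\varepsilon,\infty)$, and $\nabla^\varepsilon(Y)=Y\circ\mathsf{Grow}^\varepsilon$. Type $A$ diagram: for $F$ $S$-constructible, define $dF_A:\mathsf{Dgm}\to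 A(\mathcal{C})$ by $dF_A([p,s_i))=[\operatorname{im}F(p\le s_i-\delta)]$ for any $\delta>0$ with $\max(p,s_{i-1})\le s_i-\delta$ ($s_0=-\infty$); $dF_A([p,\infty))=[\operatorname{im}F(p\le s')]$ for any $s'>\max(p,s_n)$; $dF_A([p,q))=[\operatorname{im}F(p\le q)]$ for all other intervals (independent of choices). $F_A$ is its Möbius inversion: $F_A([s_i,s_j))=dF_A([s_i,s_j))-dF_A([s_i,s_{j+1}))+dF_A([s_{i-1},s_{j+1}))-dF_A([s_{i-1},s_j))$, $F_A([s_i,\infty))=dF_A([s_i,\infty))-dF_A([s_{i-1},\infty))$ ($s_0$ any value $<s_1$, $s_{n+1}$ any value $>s_n$), and $F_A(I)=0$ otherwise; it satisfies $dF_A(I)=\sum_{J\supseteq I}F_A(J)$. *)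

(* Defs.v *)
From HB Require Import structures.
From mathcomp Require Import all_boot all_order all_algebra.
From mathcomp Require Import reals.
Set Implicit Arguments.
Unset Strict Implicit.
Unset Printing Implicit Defensive.
Import Order.TTheory GRing.Theory Num.Theory.
Local Open Scope ring_scope.

(* "Essentially small": objects form a type Obj living in a universe. *)
Record category := Cat {
  Obj : Type;
  Hom : Obj -> Obj -> Type;
  idm : forall a, Hom a a;
  cmp : forall a b c, Hom b c -> Hom a b -> Hom a c;
  comp_id_l : forall a b (f : Hom a b), cmp (idm b) f = f;
  comp_id_r : forall a b (f : Hom a b), cmp f (idm a) = f;
  comp_assoc : forall a b c d (f : Hom a b) (g : Hom b c) (h : Hom c d),
      cmp h (cmp g f) = cmp (cmp h g) f }.
Arguments Hom {_}.
Arguments idm {_}.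
Arguments cmp {_ _ _ _}.

Definition mono (C : category) (a b : Obj C) (f : Hom a b) : Prop :=
  forall z (g1 g2 : Hom z a), cmp f g1 = cmp f g2 -> g1 = g2.

Definition is_iso (C : category) (a b : Obj C) (f : Hom a b) : Prop :=
  exists g : Hom b a, cmp g f = idm a /\ cmp f g = idm b.

Definition iso (C : category) (a b : Obj C) : Prop := exists f : Hom a b, is_iso f.

(* f is the identity morphism of x (forces domain = codomain = x). *)
Inductive idOn (C : category) (x : Obj C) : forall a b : Obj C, Hom a b -> Prop :=
  idOn_intro : idOn x (idm x).

Record smon (C : category) := SMon {
  ten : Obj C -> Obj C -> Obj C;
  tenh : forall a b c d, Hom a b -> Hom c d -> Hom (ten a c) (ten b d);
  tenh_id : forall a c, tenh (idm a) (idm c) = idm (ten a c);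
  tenh_comp : forall a1 b1 c1 a2 b2 c2 (f1 : Hom a1 b1) (g1 : Hom b1 c1)
      (f2 : Hom a2 b2) (g2 : Hom b2 c2),
      tenh (cmp g1 f1) (cmp g2 f2) = cmp (tenh g1 g2) (tenh f1 f2);
  munit : Obj C;
  assoc : forall a b c, Hom (ten (ten a b) c) (ten a (ten b c));
  assoc_inv : forall a b c, Hom (ten a (ten b c)) (ten (ten a b) c);
  assoc_K : forall a b c, cmp (assoc_inv a b c) (assoc a b c) = idm _;
  assoc_Kv : forall a b c, cmp (assoc a b c) (assoc_inv a b c) = idm _;
  assoc_nat : forall a a' b b' c c' (f : Hom a a') (g : Hom b b') (h : Hom c c'),
      cmp (assoc a' b' c') (tenh (tenh f g) h) = cmp (tenh f (tenh g h)) (assoc a b c);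
  lunit : forall a, Hom (ten munit a) a;
  lunit_inv : forall a, Hom a (ten munit a);
  lunit_K : forall a, cmp (lunit_inv a) (lunit a) = idm _;
  lunit_Kv : forall a, cmp (lunit a) (lunit_inv a) = idm _;
  lunit_nat : forall a b (f : Hom a b), cmp (lunit b) (tenh (idm munit) f) = cmp f (lunit a);
  runit : forall a, Hom (ten a munit) a;
  runit_inv : forall a, Hom a (ten a munit);
  runit_K : forall a, cmp (runit_inv a) (runit a) = idm _;
  runit_Kv : forall a, cmp (runit a) (runit_inv a) = idm _;
  runit_nat : forall a b (f : Hom a b), cmp (runit b) (tenh f (idm munit)) = cmp f (runit a);
  braid : forall a b, Hom (ten a b) (ten b a);
  braid_nat : forall a a' b b' (f : Hom a a') (g : Hom b b'),
      cmp (braid a' b') (tenh f g) = cmp (tenh g f) (braid a b);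
  braid_sym : forall a b, cmp (braid b a) (braid a b) = idm _;
  pentagon : forall a b c d,
      cmp (assoc a b (ten c d)) (assoc (ten a b) c d)
      = cmp (tenh (idm a) (assoc b c d))
             (cmp (assoc a (ten b c) d) (tenh (assoc a b c) (idm d)));
  triangle : forall a b,
      cmp (tenh (idm a) (lunit b)) (assoc a munit b) = tenh (runit a) (idm b);
  hexagon : forall a b c,
      cmp (assoc b c a) (cmp (braid a (ten b c)) (assoc a b c))
      = cmp (tenh (idm b) (braid a c)) (cmp (assoc b a c) (tenh (braid a b) (idm c)))
}.
Arguments ten {C}.
Arguments tenh {C} s {a b c d}.
Arguments munit {C}.

Record images (C : category) := Images {
  im : forall a b : Obj C, Hom a b -> Obj C;
  im_m : forall a b (f : Hom a b), Hom (im f) b;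
  im_e : forall a b (f : Hom a b), Hom a (im f);
  im_mono : forall a b (f : Hom a b), mono (im_m f);
  im_fact : forall a b (f : Hom a b), cmp (im_m f) (im_e f) = f;
  im_univ : forall a b (f : Hom a b) z (g : Hom a z) (h : Hom z b),
      mono h -> cmp h g = f -> exists k : Hom (im f) z, cmp h k = im_m f
}.
Arguments im {C} i {a b}.
Arguments im_m {C} i {a b}.

Record concrete (C : category) (I : images C) := Concrete {
  U : Obj C -> Type;
  Uh : forall a b : Obj C, Hom a b -> U a -> U b;
  Uh_id : forall a x, Uh (idm a) x = x;
  Uh_comp : forall a b c (f : Hom a b) (g : Hom b c) x, Uh (cmp g f) x = Uh g (Uh f x);
  Uh_faithful : forall a b (f g : Hom a b), (forall x, Uh f x = Uh g x) -> f = g;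
  Uh_im_inj : forall a b (f : Hom a b), injective (Uh (im_m I f));
  Uh_im_range : forall a b (f : Hom a b) y,
      (exists z, Uh (im_m I f) z = y) <-> (exists x, Uh f x = y)
}.

(* A(C): the group completion of the commutative monoid I(C) of iso    *)
(* classes under [a]+[b] = [a (x) b], given by its defining properties *)
(* (it is unique up to unique isomorphism).                           *)
Record groth (C : category) (M : smon C) := Groth {
  gA : zmodType;
  cls : Obj C -> gA;
  cls_ten : forall a b, cls (ten M a b) = cls a + cls b;
  cls_eq : forall a b, cls a = cls b <-> exists k, iso (ten M a k) (ten M b k);
  cls_gen : forall x : gA, exists a b, x = cls a - cls b
}.
Arguments cls {C M} g.

Definition ple (C : category) (M : smon C) (K : groth M) (x y : gA K) : Prop :=
  exists c, y - x = cls K c.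

Record pmod (R : realType) (C : category) := PMod {
  Fo : R -> Obj C;
  Fm : forall p q : R, p <= q -> Hom (Fo p) (Fo q);
  Fm_id : forall p (h : p <= p), Fm h = idm (Fo p);
  Fm_comp : forall p q r (h1 : p <= q) (h2 : q <= r) (h3 : p <= r),
      Fm h3 = cmp (Fm h2) (Fm h1)
}.
Arguments Fm {R C} _ {_ _}.

Definition constructible (R : realType) (C : category) (M : smon C) (F : pmod R C)
    (s : seq R) : Prop :=
  [/\ s != [::], sorted <%R s,
      forall p q (h : p <= q), q < head 0 s -> idOn (munit M) (Fm F h),
      forall (i : nat) p q (h : p <= q), (i.+1 < size s)%N ->
          s`_i <= p -> q < s`_i.+1 -> is_iso (Fm F h) &
      forall p q (h : p <= q), last 0 s <= p -> is_iso (Fm F h)].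

(* Interleavings. Delta^eps G = G o Shift^eps; naturality is required  *)
(* for every proof of the order relations involved; sigma^{2 eps}_F at *)
(* r is F(r <= r + eps + eps).                                         *)
Definition interleaved (R : realType) (C : category) (F G : pmod R C) (eps : R) : Prop :=
  exists (phi : forall r, Hom (Fo F r) (Fo G (r + eps)))
         (psi : forall r, Hom (Fo G r) (Fo F (r + eps))),
  [/\ forall p q (h : p <= q) (h' : p + eps <= q + eps),
        cmp (Fm G h') (phi p) = cmp (phi q) (Fm F h),
      forall p q (h : p <= q) (h' : p + eps <= q + eps),
        cmp (Fm F h') (psi p) = cmp (psi q) (Fm G h),
      forall r (h : r <= r + eps + eps), cmp (psi (r + eps)) (phi r) = Fm F h &
      forall r (h : r <= r + eps + eps), cmp (phi (r + eps)) (psi r) = Fm G h].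

Definition dI_eq (R : realType) (C : category) (F G : pmod R C) (eps : R) : Prop :=
  [/\ 0 <= eps, interleaved F G eps &
      forall d, 0 <= d -> interleaved F G d -> eps <= d].

(* IFin q r = [q, r), IInf q = [q, oo).                                *)
Inductive itv (R : Type) := IFin of R & R | IInf of R.
Arguments IFin {R}.
Arguments IInf {R}.

Section Diagrams.
Variable R : realType.

Definition valid (I : itv R) : bool :=
  match I with IFin q r => q < r | IInf _ => true end.

Definition contains (J I : itv R) : bool :=
  match J, I with
  | IFin q r, IFin q' r' => (q <= q') && (r' <= r)
  | IInf q, IFin q' _ => q <= q'
  | IInf q, IInf q' => q <= q'
  | IFin _ _, IInf _ => false
  end.

Definition endpoints_in (ts : seq R) (I : itv R) : bool :=
  match I with IFin q r => (q \in ts) && (r \in ts) | IInf q => q \in ts end.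

Definition grow (eps : R) (I : itv R) : itv R :=
  match I with IFin p q => IFin (p - eps) (q + eps) | IInf p => IInf (p - eps) end.

Variable V : zmodType.

Definition supported (Y : itv R -> V) (ts : seq R) : Prop :=
  forall I, Y I != 0 -> valid I && endpoints_in ts I.

Definition is_pdgm (Y : itv R -> V) : Prop := exists ts, supported Y ts.

Definition cands (ts : seq R) : seq (itv R) :=
  let u := undup ts in [seq IFin a b | a <- u, b <- u] ++ [seq IInf a | a <- u].

(* sum_{J \supseteq I} Y(J), computed over a finite support ts of Y *)
Definition upsum (Y : itv R -> V) (ts : seq R) (I : itv R) : V :=
  \sum_(J <- cands ts | contains J I) Y J.

Definition nabla (eps : R) (Y : itv R -> V) : itv R -> V :=
  fun I => if valid I then Y (grow eps I) else 0.

End Diagrams.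

Definition pdgm_hom (R : realType) (C : category) (M : smon C) (K : groth M)
    (Y1 Y2 : itv R -> gA K) : Prop :=
  [/\ is_pdgm Y1, is_pdgm Y2 &
      forall ts, supported Y1 ts -> supported Y2 ts ->
      forall I, valid I -> Y1 I != 0 -> ple (upsum Y1 ts I) (upsum Y2 ts I)].

Section TypeA.
Variables (R : realType) (C : category) (M : smon C) (K : groth M) (Im : images C)
          (F : pmod R C).

(* [im F(p <= q)] in A(C) (0 if p > q; never used in that case) *)
Definition clsim (p q : R) : gA K :=
  (if p <= q as b return (p <= q) = b -> gA K
   then fun h => cls K (im Im (Fm F h)) else fun _ => 0) (erefl (p <= q)).

Variable s : seq R.

(* s_k with paper indexing, k = 0..n+1; s_0 := s_1 - 1 < s_1,
   s_{n+1} := s_n + 1 > s_n. *)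
Definition sp (k : nat) : R :=
  if k == 0%N then head 0 s - 1
  else if (k <= size s)%N then s`_k.-1 else last 0 s + 1.

(* dF_A.  For [p, s_i) we take s_i - delta := max(p, s_{i-1})
   (:= p when i = 1); for [p, oo) we take s' := max(p, s_n) + 1. *)
Definition dFA (I : itv R) : gA K :=
  match I with
  | IFin p q =>
      if q \in s then
        let i := index q s in
        clsim p (if i == 0%N then p else Num.max p s`_i.-1)
      else clsim p q
  | IInf p => clsim p (Num.max p (last 0 s) + 1)
  end.

(* F_A: Moebius inversion. Indices i, j are paper indices (1-based). *)
Definition FA (I : itv R) : gA K :=
  match I with
  | IFin a b =>
      if [&& a \in s, b \in s & (index a s < index b s)%N] then
        let i := (index a s).+1 in let j := (index b s).+1 in
        dFA (IFin (sp i) (sp j)) - dFA (IFin (sp i) (sp j.+1))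
        + dFA (IFin (sp i.-1) (sp j.+1)) - dFA (IFin (sp i.-1) (sp j))
      else 0
  | IInf a =>
      if a \in s then
        let i := (index a s).+1 in dFA (IInf (sp i)) - dFA (IInf (sp i.-1))
      else 0
  end.

End TypeA.

(* Main.v *)
Require Import Defs.
From HB Require Import structures.
From mathcomp Require Import all_boot all_order all_algebra.
From mathcomp Require Import reals.
From mathcomp Require Import lra.
Set Implicit Arguments.
Unset Strict Implicit.
Unset Printing Implicit Defensive.
Import Order.TTheory GRing.Theory Num.Theory.
Local Open Scope ring_scope.
Notation Hom := Defs.Hom.
Notation im := Defs.im.


Lemma im_e_epi (C : category) (Im : images C) (Cc : concrete Im) (a b : Obj C)
  (f : Hom a b) z (u v : Hom (im Im f) z) :
  cmp u (im_e Im f) = cmp v (im_e Im f) -> u = v.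
Proof.
move=> E; apply: Uh_faithful => y.
have [x Hx] : exists x, Uh (c0:=Cc) f x = Uh (c0:=Cc) (im_m Im f) y.
  by apply/Uh_im_range; exists y.
have Hy : Uh (c0:=Cc) (im_e Im f) x = y.
  apply: (@Uh_im_inj _ _ Cc _ _ f); rewrite -Uh_comp im_fact; exact: Hx.
by rewrite -Hy -!Uh_comp E.
Qed.

Lemma mono_comp_l (C : category) (a b c : Obj C) (f : Hom a b) (g : Hom b c) :
  mono (cmp g f) -> mono f.
Proof.
move=> H z g1 g2 E; apply: H; by rewrite -!comp_assoc E.
Qed.

Lemma iso_cls (C : category) (M : smon C) (K : groth M) (a b : Obj C) :
  iso a b -> cls K a = cls K b.
Proof.
case=> f [g [H1 H2]]; apply/(cls_eq K); exists (munit M).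
exists (tenh M f (idm (munit M))); exists (tenh M g (idm (munit M))).
by rewrite -!tenh_comp H1 H2 !comp_id_l !tenh_id.
Qed.

Lemma cls_unit (C : category) (M : smon C) (K : groth M) : cls K (munit M) = 0.
Proof.
have : cls K (ten M (munit M) (munit M)) = cls K (munit M).
  apply: iso_cls; exists (lunit M _); exists (lunit_inv M _).
  by rewrite lunit_K lunit_Kv.
rewrite cls_ten => /eqP; rewrite -subr_eq0 addrK => /eqP //.
Qed.


Lemma c2 (C : category) (a b c d : Obj C) (h : Hom b c) (g : Hom a b) (k : Hom a c) (X : Hom d a) :
  cmp h g = k -> cmp h (cmp g X) = cmp k X.
Proof. by move=> <-; rewrite comp_assoc. Qed.

Lemma c2id (C : category) (a b d : Obj C) (h : Hom b a) (g : Hom a b) (X : Hom d a) :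
  cmp h g = idm a -> cmp h (cmp g X) = X.
Proof. by move=> E; rewrite (c2 _ E) comp_id_l. Qed.

Lemma absL (C : category) (Im : images C) (Cc : concrete Im)
  (A X A' B' Y B : Obj C) (Q : Hom A X) (S : Hom X A') (f' : Hom A' B')
  (Rr : Hom B' Y) (P : Hom Y B) (g : Hom X Y) (f : Hom A B) :
  is_iso (cmp S Q) -> is_iso (cmp P Rr) ->
  g = cmp Rr (cmp f' S) -> f = cmp P (cmp g Q) ->
  iso (im Im f) (im Im g).
Proof.
move=> [al' [Ha1 Ha2]] [be' [Hb1 Hb2]] Eg Ef.
have mg : cmp Rr (cmp be' (cmp P g)) = g.
  by rewrite Eg (c2 _ (erefl (cmp P Rr))) (c2id _ Hb1).
have mim : cmp Rr (cmp be' (cmp P (im_m Im g))) = im_m Im g.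
  apply: (im_e_epi Cc); rewrite -!comp_assoc !im_fact; exact: mg.
have monoP : mono (cmp P (im_m Im g)).
  move=> z g1 g2 E; apply: (@im_mono _ Im _ _ g).
  by rewrite -mim -!comp_assoc; rewrite -!comp_assoc in E; rewrite E.
have [k2 Hk2] : exists k2, cmp (cmp P (im_m Im g)) k2 = im_m Im f.
  apply: (@im_univ _ Im _ _ _ _ (cmp (im_e Im g) Q) _ monoP).
  by rewrite Ef -!comp_assoc (comp_assoc _ (im_e Im g)) im_fact.
have monoR : mono (cmp Rr (cmp be' (im_m Im f))).
  apply: (@mono_comp_l _ _ _ _ _ P).
  rewrite (c2 _ (erefl (cmp P Rr))) (c2id _ Hb2); exact: im_mono.
have Pg : cmp P g = cmp f (cmp al' S).
  rewrite Ef Eg -!comp_assoc (c2 _ (erefl (cmp S Q))) (c2id _ Ha2).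
  by [].
have [k Hk] : exists k, cmp (cmp Rr (cmp be' (im_m Im f))) k = im_m Im g.
  apply: (@im_univ _ Im _ _ _ _ (cmp (im_e Im f) (cmp al' S)) _ monoR).
  rewrite -!comp_assoc (comp_assoc _ (im_e Im f)) im_fact -Pg; exact: mg.
have Hk' : cmp (im_m Im f) k = cmp P (im_m Im g).
  by rewrite -Hk -!comp_assoc (c2 _ (erefl (cmp P Rr))) (c2id _ Hb2).
exists k2; exists k; split.
- apply: (@im_mono _ Im _ _ f).
  by rewrite comp_id_r comp_assoc Hk' Hk2.
- apply: monoP.
  by rewrite comp_id_r comp_assoc Hk2 Hk'.
Qed.


Lemma Fm_irr (R : realType) (C : category) (H : pmod R C) (p q : R) (h1 h2 : p <= q) :
  Fm H h1 = Fm H h2.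
Proof. by rewrite (bool_irrelevance h1 h2). Qed.

Lemma clsimE (R : realType) (C : category) (M : smon C) (K : groth M) (Im : images C)
  (H : pmod R C) (p q : R) (h : p <= q) :
  clsim K Im H p q = cls K (im Im (Fm H h)).
Proof.
have gen : forall (b : bool) (e : (p <= q) = b),
  (if b as b0 return (p <= q) = b0 -> gA K
   then fun h0 => cls K (im Im (Fm H h0)) else fun _ => 0) e = cls K (im Im (Fm H h)).
  case=> e; first by rewrite (Fm_irr H e h).
  by exfalso; move: e; rewrite h.
exact: (gen (p <= q) (erefl _)).
Qed.

Lemma is_iso_id (C : category) (a : Obj C) : is_iso (idm a).
Proof. by exists (idm a); rewrite comp_id_l. Qed.

Lemma clsim_pre (R : realType) (C : category) (M : smon C) (K : groth M) (Im : images C)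
  (Cc : concrete Im) (H : pmod R C) (a a' y : R) (h1 : a <= a') (h2 : a' <= y) :
  is_iso (Fm H h1) -> clsim K Im H a y = clsim K Im H a' y.
Proof.
move=> Hi; have h3 := le_trans h1 h2.
rewrite (clsimE K Im H h3) (clsimE K Im H h2); apply: iso_cls.
apply: (@absL _ _ Cc _ _ _ _ _ _ (Fm H h1) (idm _) (Fm H h2) (idm _) (idm _)).
- by rewrite comp_id_l.
- by rewrite comp_id_l; exact: is_iso_id.
- by rewrite comp_id_l comp_id_r.
- by rewrite comp_id_l (Fm_comp H h1 h2 h3).
Qed.

Lemma clsim_post (R : realType) (C : category) (M : smon C) (K : groth M) (Im : images C)
  (Cc : concrete Im) (H : pmod R C) (a y y' : R) (h1 : a <= y) (h2 : y <= y') :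
  is_iso (Fm H h2) -> clsim K Im H a y' = clsim K Im H a y.
Proof.
move=> Hi; have h3 := le_trans h1 h2.
rewrite (clsimE K Im H h3) (clsimE K Im H h1); apply: iso_cls.
apply: (@absL _ _ Cc _ _ _ _ _ _ (idm _) (idm _) (Fm H h1) (idm _) (Fm H h2)).
- by rewrite comp_id_l; exact: is_iso_id.
- by rewrite comp_id_r.
- by rewrite comp_id_l comp_id_r.
- by rewrite comp_id_r (Fm_comp H h1 h2 h3).
Qed.

Lemma clsim_core (R : realType) (C : category) (M : smon C) (K : groth M) (Im : images C)
  (Cc : concrete Im) (F G : pmod R C) (eps : R)
  (phi : forall r, Hom (Fo F r) (Fo G (r + eps)))
  (psi : forall r, Hom (Fo G r) (Fo F (r + eps))) :
  (forall p q (h : p <= q) (h' : p + eps <= q + eps),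
        cmp (Fm G h') (phi p) = cmp (phi q) (Fm F h)) ->
  (forall r (h : r <= r + eps + eps), cmp (psi (r + eps)) (phi r) = Fm F h) ->
  (forall r (h : r <= r + eps + eps), cmp (phi (r + eps)) (psi r) = Fm G h) ->
  forall a b (ha : a <= a + eps + eps) (hb : b <= b + eps + eps),
  a + eps + eps <= b -> is_iso (Fm F ha) -> is_iso (Fm F hb) ->
  clsim K Im F a (b + eps + eps) = clsim K Im G (a + eps) (b + eps).
Proof.
move=> nat1 c1 c2 a b ha hb hab Ia Ib.
have e0 : 0 <= eps by lra.
have hab1 : a <= b by lra.
have hG : a + eps <= b + eps by lra.
have hF : a <= b + eps + eps by lra.
have h3 : a + eps + eps + eps <= b + eps by lra.
have h4 : a + eps <= a + eps + eps + eps by lra.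
rewrite (clsimE K Im F hF) (clsimE K Im G hG); apply: iso_cls.
apply: (@absL _ _ Cc _ _ _ _ _ _ (phi a) (psi (a + eps)) (Fm F hab) (phi b) (psi (b + eps))).
- by rewrite (c1 a ha).
- by rewrite (c1 b hb).
- rewrite comp_assoc -(nat1 _ _ hab h3) -comp_assoc (c2 _ h4).
  exact: Fm_comp.
- rewrite (nat1 _ _ hab1 hG) comp_assoc (c1 b hb).
  exact: Fm_comp.
Qed.


Lemma prefix_count (R : realType) (P : pred R)
  (Pdown : forall x y, x < y -> P y -> P x) (T : seq R) :
  sorted <%R T -> forall i, (i < size T)%N -> P (T`_i) = (i < count P T)%N.
Proof.
elim: T => [//|x T IH] /= Hp.
have Hs : sorted <%R T := path_sorted Hp.
have Hall : all (fun y => x < y) T by apply: order_path_min => //; exact: lt_trans.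
have c0 : ~~ P x -> count P T = 0%N.
  move=> nPx; apply/eqP; rewrite -leqn0 leqNgt -has_count; apply/hasPn => y yT.
  apply/negP => Py; move/negP: nPx; apply; apply: (Pdown x y) => //.
  exact: (allP Hall).
case=> [|k] /=.
  by case: (boolP (P x)) => Px //=; rewrite c0.
rewrite ltnS => kT; case: (boolP (P x)) => Px /=.
  by rewrite add1n ltnS IH.
rewrite c0 // add0n ltn0; apply/negP => PT; move/negP: Px; apply.
apply: (Pdown x (T`_k)) => //; apply: (allP Hall); exact: mem_nth.
Qed.

Lemma path_mem_le_last (R : realType) (T : seq R) :
  forall y, path <%R y T -> forall x, x \in y :: T -> x <= last y T.
Proof.
elim: T => [|z T IH] y /= Hp x.
  by rewrite inE => /eqP ->.
case/andP: Hp => yz Hp; rewrite inE => /orP [/eqP ->|xT].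
  apply: (le_trans (ltW yz)); exact: (IH z Hp z (mem_head _ _)).
exact: (IH z Hp x xT).
Qed.

Lemma sorted_mem_le_last (R : realType) (T : seq R) :
  sorted <%R T -> forall x, x \in T -> x <= last 0 T.
Proof. case: T => [//|y T] /= Hp x xT; exact: path_mem_le_last. Qed.

Lemma sorted_head_le_last (R : realType) (T : seq R) :
  sorted <%R T -> head 0 T <= last 0 T.
Proof.
case: T => [//|y T] Hs; apply: sorted_mem_le_last => //; exact: mem_head.
Qed.

Lemma zmod_aux (V : zmodType) (x y u v : V) : (x - u) - (y - v) + (u - v) = x - y.
Proof.
by rewrite opprB addrAC -(addrA x (- u)) addKr -addrA addKr.
Qed.

Lemma sp_le_last (R : realType) (T : seq R) k :
  sorted <%R T -> (k <= size T)%N -> sp T k <= last 0 T.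
Proof.
move=> Hs kn; rewrite /sp; case: eqP => [_|/eqP k0].
  apply: le_trans (sorted_head_le_last Hs); lra.
rewrite kn; apply: sorted_mem_le_last => //; apply: mem_nth.
by case: k k0 kn => [//|k] _ /=.
Qed.

Lemma DE_lem (R : realType) (C : category) (M : smon C) (K : groth M) (Im : images C)
  (H : pmod R C) (T : seq R) k :
  sorted <%R T -> (k <= size T)%N ->
  dFA K Im H T (IFin (sp T k) (sp T (size T).+1)) = dFA K Im H T (IInf (sp T k)).
Proof.
move=> Hs kn.
have -> : sp T (size T).+1 = last 0 T + 1 by rewrite /sp /= ltnn.
rewrite /dFA; case: ifP => [/(sorted_mem_le_last Hs) HH|_]; first by exfalso; lra.
by rewrite max_r // sp_le_last.
Qed.

Lemma FA_inf_nth (R : realType) (C : category) (M : smon C) (K : groth M) (Im : images C)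
  (H : pmod R C) (T : seq R) i :
  sorted <%R T -> (i < size T)%N ->
  FA K Im H T (IInf T`_i) = dFA K Im H T (IInf (sp T i.+1)) - dFA K Im H T (IInf (sp T i)).
Proof.
move=> Hs iT; have uT : uniq T := lt_sorted_uniq Hs.
by rewrite /FA mem_nth // index_uniq.
Qed.

Lemma FA_fin_nth (R : realType) (C : category) (M : smon C) (K : groth M) (Im : images C)
  (H : pmod R C) (T : seq R) i j :
  sorted <%R T -> (i < size T)%N -> (j < size T)%N ->
  FA K Im H T (IFin T`_i T`_j) =
  if (i < j)%N then
    dFA K Im H T (IFin (sp T i.+1) (sp T j.+1)) - dFA K Im H T (IFin (sp T i.+1) (sp T j.+2))
    + dFA K Im H T (IFin (sp T i) (sp T j.+2)) - dFA K Im H T (IFin (sp T i) (sp T j.+1))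
  else 0.
Proof.
move=> Hs iT jT; have uT : uniq T := lt_sorted_uniq Hs.
by rewrite /FA !mem_nth // !index_uniq.
Qed.

Lemma upsum_inf (R : realType) (C : category) (M : smon C) (K : groth M) (Im : images C)
  (H : pmod R C) (T : seq R) (p : R) :
  sorted <%R T ->
  \sum_(J <- cands T | contains J (IInf p)) FA K Im H T J =
  dFA K Im H T (IInf (sp T (count (fun t => t <= p) T))) - dFA K Im H T (IInf (sp T 0)).
Proof.
move=> Hs; have uT : uniq T := lt_sorted_uniq Hs.
set a := count _ T.
have an : (a <= size T)%N := count_size _ _.
have hle : forall i, (i < size T)%N -> (T`_i <= p) = (i < a)%N.
  apply: prefix_count => // x y xy yp; exact: le_trans (ltW xy) yp.
rewrite big_mkcond /cands undup_id // big_cat /= big_allpairs_dep /=.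
rewrite big1 ?add0r; last by move=> x _; rewrite big1.
rewrite big_map (big_nth 0) (big_cat_nat (leq0n a) an) /=.
rewrite [X in _ + X]big1_seq ?addr0; last first.
  move=> i /andP [_]; rewrite mem_index_iota => /andP [ai iT].
  by rewrite hle // ltnNge ai.
apply: (telescope_sumr_eq (fun k => dFA K Im H T (IInf (sp T k)))) => // i /andP [_ ia].
have iT : (i < size T)%N := leq_trans ia an.
rewrite /= hle // ia.
exact: FA_inf_nth.
Qed.

Lemma nn (V : zmodType) (x y : V) : - x - - y = y - x.
Proof. by rewrite opprK addrC. Qed.

Lemma contFF (R : realType) (a b p q : R) :
  contains (IFin a b) (IFin p q) = (a <= p) && (q <= b).
Proof. by []. Qed.

Lemma upsum_fin (R : realType) (C : category) (M : smon C) (K : groth M) (Im : images C)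
  (H : pmod R C) (T : seq R) (p q : R) :
  sorted <%R T -> p < q ->
  \sum_(J <- cands T | contains J (IFin p q)) FA K Im H T J =
  dFA K Im H T (IFin (sp T (count (fun t => t <= p) T)) (sp T (count (fun t => t < q) T).+1))
  - dFA K Im H T (IFin (sp T 0) (sp T (count (fun t => t < q) T).+1)).
Proof.
move=> Hs pq; have uT : uniq T := lt_sorted_uniq Hs.
set a := count (fun t => t <= p) T; set b := count (fun t => t < q) T.
have an : (a <= size T)%N := count_size _ _.
have bn : (b <= size T)%N := count_size _ _.
have hle : forall i, (i < size T)%N -> (T`_i <= p) = (i < a)%N.
  apply: prefix_count => // x y xy yp; exact: le_trans (ltW xy) yp.
have hlt : forall i, (i < size T)%N -> (T`_i < q) = (i < b)%N.
  apply: prefix_count => // x y xy yp; exact: lt_trans xy yp.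
have ab : (a <= b)%N.
  rewrite /a /b; apply: sub_count => x /= xp; exact: le_lt_trans xp pq.
pose D k l := dFA K Im H T (IFin (sp T k) (sp T l)).
pose E k := dFA K Im H T (IInf (sp T k)).
rewrite big_mkcond /cands undup_id // big_cat big_allpairs_dep big_map.
have Hinf : \sum_(i <- T) (if contains (IInf i) (IFin p q) then FA K Im H T (IInf i) else 0)
    = E a - E 0.
  rewrite (big_nth 0) (big_cat_nat (leq0n a) an) /=.
  rewrite [X in _ + X]big1_seq ?addr0; last first.
    move=> i /andP [_]; rewrite mem_index_iota => /andP [ai iT].
    by rewrite hle // ltnNge ai.
  apply: (telescope_sumr_eq E) => // i /andP [_ ia].
  have iT : (i < size T)%N := leq_trans ia an.
  rewrite /= hle // ia; exact: FA_inf_nth.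
have Hrow : forall i, (i < size T)%N ->
  \sum_(j <- T) (if contains (IFin T`_i j) (IFin p q) then FA K Im H T (IFin T`_i j) else 0)
  = if (i < a)%N then (D i.+1 b.+1 - D i.+1 (size T).+1) - (D i b.+1 - D i (size T).+1) else 0.
  move=> i iT; rewrite (big_nth 0).
  under eq_bigr => j _ do rewrite contFF hle //.
  case: ifP => ia; last first.
    by rewrite big1_seq // => j _.
  rewrite (big_cat_nat (leq0n b) bn) /=.
  rewrite big1_seq ?add0r; last first.
    move=> j /andP [_]; rewrite mem_index_iota => /andP [_ jb].
    have jT : (j < size T)%N := leq_trans jb bn.
    by rewrite leNgt hlt // jb.
  have -> : \sum_(b <= j < size T)
     (if (q <= T`_j) then FA K Im H T (IFin T`_i T`_j) else 0) =
     \sum_(b <= j < size T) ((D i.+1 j.+1 - D i.+1 j.+2) - (D i j.+1 - D i j.+2)).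
    apply: eq_big_nat => j /andP [bj jT].
    have ij : (i < j)%N := leq_trans ia (leq_trans ab bj).
    rewrite leNgt hlt // ltnNge bj FA_fin_nth // ij /D.
    by rewrite negbK opprB addrA.
  rewrite sumrB (telescope_sumr_eq (fun k => - D i.+1 k.+1) (fun j => D i.+1 j.+1 - D i.+1 j.+2)) //;
    last by move=> k _; rewrite opprK addrC.
  rewrite (telescope_sumr_eq (fun k => - D i k.+1) (fun j => D i j.+1 - D i j.+2)) //;
    last by move=> k _; rewrite opprK addrC.
  by rewrite !nn.
rewrite Hinf (big_nth 0).
rewrite (eq_big_nat _ _ (fun i Hi => Hrow i (proj2 (andP Hi)))).
rewrite (big_cat_nat (leq0n a) an) /=.
rewrite [\sum_(a <= i < size T) _]big1_seq ?addr0; last first.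
  move=> i /andP [_]; rewrite mem_index_iota => /andP [ai iT].
  by rewrite ltnNge ai.
rewrite (telescope_sumr_eq (fun k => D k b.+1 - D k (size T).+1)); last first.
  by move=> i /andP [_ ia]; rewrite ia.
  by [].
rewrite /D !DE_lem //.
exact: zmod_aux.
Qed.


Lemma idOn_iso (C : category) (x a b : Obj C) (f : Hom a b) : idOn x f -> is_iso f.
Proof. case; exact: is_iso_id. Qed.

Lemma cell_iso (R : realType) (C : category) (M : smon C) (H : pmod R C) (s : seq R) :
  constructible M H s -> forall x y (h : x <= y),
  (forall t, t \in s -> x < t -> y < t) -> is_iso (Fm H h).
Proof.
case=> sn Hs Hbef Hmid Haft x y h Hc.
case: (ltP y (head 0 s)) => [yh|hy]; first exact: idOn_iso (Hbef _ _ h yh).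
case: (leP (last 0 s) x) => [lx|xl]; first exact: Haft.
have hs0 : (0 < size s)%N by case: s sn {Hs Hbef Hmid Haft hy xl Hc}.
have hx : head 0 s <= x.
  rewrite leNgt; apply/negP => xh.
  have := Hc (head 0 s); rewrite -nth0 mem_nth // => /(_ isT).
  rewrite nth0 => /(_ xh); lra.
pose k := count (fun t => t <= x) s.
have pc : forall i, (i < size s)%N -> (s`_i <= x) = (i < k)%N.
  apply: prefix_count => // a b ab bx; exact: le_trans (ltW ab) bx.
have k0 : (0 < k)%N by rewrite -pc // nth0.
have ks : (k < size s)%N.
  rewrite ltnNge; apply/negP => sk.
  have : s`_(size s).-1 <= x by rewrite pc // ?prednK // (leq_trans _ sk) // ltn_predL.
  rewrite nth_last; lra.
have := Hmid k.-1 x y h; rewrite prednK //; apply => //.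
  by rewrite pc ?ltn_predL // (leq_ltn_trans (leq_pred k) ks).
apply: Hc; first exact: mem_nth.
by rewrite ltNge pc // ltnn.
Qed.


Definition itv_eqb (T : eqType) (I J : itv T) : bool :=
  match I, J with
  | IFin a b, IFin c d => (a == c) && (b == d)
  | IInf a, IInf c => a == c
  | _, _ => false
  end.

Lemma itv_eqP (T : eqType) : Equality.axiom (@itv_eqb T).
Proof.
case=> [a b|a] [c d|c] /=; try by constructor.
- apply: (iffP andP) => [[/eqP -> /eqP ->]|[-> ->]] //; by rewrite !eqxx.
- apply: (iffP eqP) => [->|[->]] //.
Qed.

HB.instance Definition _ (T : eqType) := hasDecEq.Build (itv T) (@itv_eqP T).

Lemma mem_candsF (R : realType) (ts : seq R) a b :
  (IFin a b \in cands ts) = (a \in ts) && (b \in ts).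
Proof.
rewrite /cands mem_cat.
have -> : (IFin a b \in [seq IInf a0 | a0 <- undup ts]) = false by apply/mapP => -[].
rewrite orbF -(mem_undup ts) -[b \in ts](mem_undup ts).
apply/allpairsP/andP.
- by case=> [[x y] /= [xt yt [-> ->]]].
- by case=> at' bt; exists (a, b).
Qed.

Lemma mem_candsI (R : realType) (ts : seq R) a :
  (IInf a \in cands ts) = (a \in ts).
Proof.
rewrite /cands mem_cat.
have -> : (IInf a \in [seq IFin a0 b0 | a0 <- undup ts, b0 <- undup ts]) = false.
  by apply/allpairsP => -[[x y] [_ _ //]].
rewrite orFb -(mem_undup ts) mem_map //; by move=> x y [].
Qed.
Lemma uniq_cands (R : realType) (ts : seq R) : uniq (cands ts).
Proof.
rewrite /cands cat_uniq; apply/and3P; split.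
- apply: allpairs_uniq; try exact: undup_uniq.
  by move=> [x y] [x' y'] _ _ /= [-> ->].
- apply/hasPn => J /mapP [x _ ->]; apply/negP => /allpairsP [[? ?] [_ _ //]].
- rewrite map_inj_uniq ?undup_uniq // => x y [] //.
Qed.

Lemma sum_supp (R : realType) (V : zmodType) (Y : itv R -> V) (r1 r2 : seq (itv R))
  (P : pred (itv R)) :
  uniq r1 -> uniq r2 -> (forall x, Y x != 0 -> (x \in r1) && (x \in r2)) ->
  \sum_(x <- r1 | P x) Y x = \sum_(x <- r2 | P x) Y x.
Proof.
move=> u1 u2 Hx.
have E1 : forall r, \sum_(x <- r | P x) Y x = \sum_(x <- [seq x <- r | P x && (Y x != 0)]) Y x.
  move=> r; rewrite big_filter big_mkcond [RHS]big_mkcond; apply: eq_bigr => x _.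
  by case: (P x) => //=; case: eqP.
rewrite !E1; apply: perm_big; apply: uniq_perm; try exact: filter_uniq.
move=> x; rewrite !mem_filter; case: (boolP (P x && (Y x != 0))) => //= /andP [_ /Hx].
by case/andP => -> ->.
Qed.


Lemma nth_lt (R : realType) (T : seq R) i j :
  sorted <%R T -> (i < j)%N -> (j < size T)%N -> T`_i < T`_j.
Proof.
move=> Hs ij jT; apply: (sorted_ltn_nth lt_trans 0 Hs) => //.
by rewrite inE (ltn_trans ij).
Qed.

Lemma nth_le (R : realType) (T : seq R) i j :
  sorted <%R T -> (i <= j)%N -> (j < size T)%N -> T`_i <= T`_j.
Proof.
move=> Hs; rewrite leq_eqVlt => /orP [/eqP -> //|ij] jT.
exact: ltW (nth_lt Hs ij jT).
Qed.

Lemma anchorA (R : realType) (T : seq R) (p : R) :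
  sorted <%R T -> let a := count (fun t => t <= p) T in
  (0 < a)%N -> sp T a <= p /\ (forall t, t \in T -> sp T a < t -> p < t).
Proof.
move=> Hs a a0.
have an : (a <= size T)%N := count_size _ _.
have pc : forall i, (i < size T)%N -> (T`_i <= p) = (i < a)%N.
  apply: prefix_count => // x y xy yp; exact: le_trans (ltW xy) yp.
have spa : sp T a = T`_a.-1.
  by rewrite /sp; case: eqP => [a0'|_]; [rewrite a0' in a0|rewrite an].
have a1 : (a.-1 < size T)%N by rewrite (leq_trans _ an) // ltn_predL.
rewrite spa; split; first by rewrite pc // ltn_predL.
move=> t /(nthP 0) [m mT <-] lt.
rewrite ltNge pc //; apply/negP => ma.
have : T`_m <= T`_a.-1 by apply: nth_le => //; rewrite -ltnS prednK.
lra.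
Qed.

Lemma anchorA0 (R : realType) (T : seq R) (p : R) :
  count (fun t => t <= p) T = 0%N -> forall t, t \in T -> p < t.
Proof.
move=> c0 t tT; rewrite ltNge; apply/negP => tp.
have : (0 < count (fun t : R => (t <= p)%R) T)%N by rewrite -has_count; apply/hasP; exists t.
by rewrite c0.
Qed.

Lemma anchorG (R : realType) (C : category) (M : smon C) (K : groth M) (Im : images C)
  (Cc : concrete Im) (H : pmod R C) (T : seq R) k q :
  constructible M H T -> (k <= size T)%N -> sp T k < q ->
  exists w0, [/\ sp T k <= w0, w0 < q, (forall t, t \in T -> w0 < t -> q <= t) &
   forall y, w0 <= y -> y < q ->
     dFA K Im H T (IFin (sp T k) (sp T (count (fun t => t < q) T).+1))
     = clsim K Im H (sp T k) y].
Proof.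
move=> HT kn kq; have [sn Hs _ _ _] := HT.
have uT : uniq T := lt_sorted_uniq Hs.
set b := count (fun t => t < q) T.
have bn : (b <= size T)%N := count_size _ _.
have pc : forall i, (i < size T)%N -> (T`_i < q) = (i < b)%N.
  apply: prefix_count => // x y xy yp; exact: lt_trans xy yp.
have post : forall z y, sp T k <= z -> z <= y ->
    (forall t, t \in T -> z < t -> y < t) ->
    clsim K Im H (sp T k) y = clsim K Im H (sp T k) z.
  move=> z y h1 h2 Hc; apply: (@clsim_post _ _ _ K Im Cc H _ _ _ h1 h2); exact: cell_iso HT _ _ h2 Hc.
case: (ltnP b (size T)) => bs.
- have e : sp T b.+1 = T`_b by rewrite /sp /= bs.
  pose z := if b == 0%N then sp T k else Num.max (sp T k) T`_b.-1.
  have Ez : dFA K Im H T (IFin (sp T k) (sp T b.+1)) = clsim K Im H (sp T k) z.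
    by rewrite e /dFA mem_nth // index_uniq.
  have b1 : (b.-1 < size T)%N by rewrite (leq_ltn_trans (leq_pred b) bs).
  have zq : z < q.
    rewrite /z; case: eqP => [//|/eqP b0].
    by rewrite gt_max kq /= pc // ltn_predL lt0n.
  have kz : sp T k <= z by rewrite /z; case: eqP => // _; rewrite le_max lexx.
  have cq : forall t, t \in T -> z < t -> q <= t.
    move=> t /(nthP 0) [m mT <-] zt.
    rewrite leNgt pc // -leqNgt; case: (leqP b m) => // mb.
    have : T`_m <= z.
      rewrite /z; case: eqP => [b0|_]; first by rewrite b0 in mb.
      rewrite le_max; apply/orP; right; apply: nth_le => //.
      by rewrite -ltnS prednK // (leq_ltn_trans (leq0n m) mb).
    lra.
  exists z; split => // y zy yq.
  rewrite Ez (post z y) // => t tT zt.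
  by apply: lt_le_trans yq (cq t tT zt).
- have bE : b = size T by apply/eqP; rewrite eqn_leq bn bs.
  have e : sp T b.+1 = last 0 T + 1 by rewrite /sp /= ltnNge bE leqnn.
  have Ez : dFA K Im H T (IFin (sp T k) (sp T b.+1)) = clsim K Im H (sp T k) (last 0 T + 1).
    rewrite e /dFA; case: ifP => // /(sorted_mem_le_last Hs) HH; exfalso; lra.
  have lastq : last 0 T < q.
    have s0 : (0 < size T)%N by case: (T) sn.
    rewrite -nth_last pc ?bE // prednK // ?ltn_predL //.
  have noT : forall w, last 0 T <= w -> forall t, t \in T -> w < t -> False.
    move=> w lw t /(sorted_mem_le_last Hs) tl wt; lra.
  exists (Num.max (sp T k) (last 0 T)); split.
  + by rewrite le_max lexx.
  + by rewrite gt_max kq lastq.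
  + move=> t tT lt; exfalso; apply: (noT _ _ t tT lt); by rewrite le_max lexx orbT.
  + move=> y my yq.
    have lm : last 0 T <= Num.max (sp T k) (last 0 T) by rewrite le_max lexx orbT.
    have km : sp T k <= Num.max (sp T k) (last 0 T) by rewrite le_max lexx.
    rewrite Ez (post _ (last 0 T + 1) km); last 2 first.
    * have := sp_le_last Hs kn; rewrite ge_max => kl; apply/andP; split; lra.
    * move=> t tT mt; exfalso; exact: noT lm t tT mt.
    rewrite (post _ y km my) // => t tT mt; exfalso; exact: noT lm t tT mt.
Qed.

Lemma anchorGI (R : realType) (C : category) (M : smon C) (K : groth M) (Im : images C)
  (Cc : concrete Im) (H : pmod R C) (T : seq R) k y :
  constructible M H T -> sp T k <= y -> last 0 T <= y ->
  dFA K Im H T (IInf (sp T k)) = clsim K Im H (sp T k) y.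
Proof.
move=> HT ky ly; have [sn Hs _ _ _] := HT.
have post : forall z y, sp T k <= z -> z <= y ->
    (forall t, t \in T -> z < t -> y < t) ->
    clsim K Im H (sp T k) y = clsim K Im H (sp T k) z.
  move=> z y' h1 h2 Hc; apply: (@clsim_post _ _ _ K Im Cc H _ _ _ h1 h2); exact: cell_iso HT _ _ h2 Hc.
set m := Num.max (sp T k) (last 0 T).
have lm : last 0 T <= m by rewrite le_max lexx orbT.
have km : sp T k <= m by rewrite le_max lexx.
have my : m <= y by rewrite ge_max ky ly.
have noT : forall t, t \in T -> m < t -> False.
  move=> t /(sorted_mem_le_last Hs) tl mt; lra.
rewrite /dFA -/m (post m (m + 1) km); last 2 first.
- lra.
- by move=> t tT mt; exfalso; exact: noT tT mt.
rewrite (post m y km my) // => t tT mt; exfalso; exact: noT tT mt.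
Qed.


Lemma head_le (R : realType) (T : seq R) t :
  sorted <%R T -> t \in T -> head 0 T <= t.
Proof.
move=> Hs /(nthP 0) [m mT <-]; rewrite -nth0; exact: nth_le.
Qed.

Lemma sp0E (R : realType) (T : seq R) : sp T 0 = head 0 T - 1.
Proof. by []. Qed.

Lemma head_le_sp (R : realType) (T : seq R) k :
  sorted <%R T -> (0 < k)%N -> (k <= size T)%N -> head 0 T <= sp T k.
Proof.
move=> Hs k0 kn; rewrite /sp; case: eqP => [k0'|_]; first by rewrite k0' in k0.
rewrite kn; apply: head_le => //; apply: mem_nth; by rewrite prednK.
Qed.

Lemma KG (R : realType) (C : category) (M : smon C) (K : groth M) (Im : images C)
  (Cc : concrete Im) (H : pmod R C) (T : seq R) (p q u : R) :
  constructible M H T -> p < q -> u <= sp T 0 -> u <= p ->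
  exists L, L < q /\ forall y, L <= y -> y < q ->
   dFA K Im H T (IFin (sp T (count (fun t => t <= p) T)) (sp T (count (fun t => t < q) T).+1))
   - dFA K Im H T (IFin (sp T 0) (sp T (count (fun t => t < q) T).+1))
   = clsim K Im H p y - clsim K Im H u y.
Proof.
move=> HT pq u0 up; have [sn Hs _ _ _] := HT.
set a := count (fun t => t <= p) T.
have an : (a <= size T)%N := count_size _ _.
have preu : forall y, sp T 0 <= y -> clsim K Im H u y = clsim K Im H (sp T 0) y.
  move=> y h2; apply: (@clsim_pre _ _ _ K Im Cc H _ _ _ u0 h2).
  apply: (cell_iso HT) => t tT _; have := head_le Hs tT; rewrite sp0E; lra.
case: (posnP a) => [a0|a0].
- exists p; split => // y py yq; rewrite a0 subrr.
  rewrite (@clsim_pre _ _ _ K Im Cc H _ _ _ up py) ?subrr //.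
  apply: (cell_iso HT) => t tT _; exact: anchorA0 a0 t tT.
- have [ap acell] := anchorA Hs a0.
  have hsa : head 0 T <= sp T a := head_le_sp Hs a0 an.
  have [w1 [w1a w1q _ Hw1]] := anchorG K Cc HT an (le_lt_trans ap pq).
  have s0q : sp T 0 < q by rewrite sp0E; lra.
  have [w2 [w2a w2q _ Hw2]] := anchorG K Cc HT (leq0n _) s0q.
  exists (Num.max (Num.max w1 w2) p); split.
    by rewrite !gt_max w1q w2q pq.
  move=> y; rewrite !ge_max => /andP [/andP [w1y w2y] py] yq.
  rewrite (Hw1 y w1y yq) (Hw2 y w2y yq) preu; last by rewrite sp0E; lra.
  congr (_ - _); apply: (@clsim_pre _ _ _ K Im Cc H _ _ _ ap py).
  apply: (cell_iso HT) => t tT; exact: acell.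
Qed.

Lemma KGI (R : realType) (C : category) (M : smon C) (K : groth M) (Im : images C)
  (Cc : concrete Im) (H : pmod R C) (T : seq R) (p u : R) :
  constructible M H T -> u <= sp T 0 -> u <= p ->
  exists L, forall y, L <= y ->
   dFA K Im H T (IInf (sp T (count (fun t => t <= p) T))) - dFA K Im H T (IInf (sp T 0))
   = clsim K Im H p y - clsim K Im H u y.
Proof.
move=> HT u0 up; have [sn Hs _ _ _] := HT.
set a := count (fun t => t <= p) T.
have an : (a <= size T)%N := count_size _ _.
have preu : forall y, sp T 0 <= y -> clsim K Im H u y = clsim K Im H (sp T 0) y.
  move=> y h2; apply: (@clsim_pre _ _ _ K Im Cc H _ _ _ u0 h2).
  apply: (cell_iso HT) => t tT _; have := head_le Hs tT; rewrite sp0E; lra.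
case: (posnP a) => [a0|a0].
- exists p => y py; rewrite a0 subrr.
  rewrite (@clsim_pre _ _ _ K Im Cc H _ _ _ up py) ?subrr //.
  apply: (cell_iso HT) => t tT _; exact: anchorA0 a0 t tT.
- have [ap acell] := anchorA Hs a0.
  have hsa : head 0 T <= sp T a := head_le_sp Hs a0 an.
  exists (Num.max p (last 0 T)) => y; rewrite ge_max => /andP [py ly].
  have s0y : sp T 0 <= y by rewrite sp0E; lra.
  rewrite (@anchorGI _ _ _ K Im Cc H T a y HT (le_trans ap py) ly).
  rewrite (@anchorGI _ _ _ K Im Cc H T 0 y HT s0y ly) preu //.
  congr (_ - _); apply: (@clsim_pre _ _ _ K Im Cc H _ _ _ ap py).
  apply: (cell_iso HT) => t tT; exact: acell.
Qed.


Lemma FA_nzF (R : realType) (C : category) (M : smon C) (K : groth M) (Im : images C)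
  (H : pmod R C) (s : seq R) a b :
  FA K Im H s (IFin a b) != 0 -> [&& a \in s, b \in s & (index a s < index b s)%N].
Proof. by rewrite /FA; case: ifP => //; rewrite eqxx. Qed.

Lemma FA_nzI (R : realType) (C : category) (M : smon C) (K : groth M) (Im : images C)
  (H : pmod R C) (s : seq R) a :
  FA K Im H s (IInf a) != 0 -> a \in s.
Proof. by rewrite /FA; case: ifP => //; rewrite eqxx. Qed.

Lemma index_lt (R : realType) (s : seq R) a b :
  sorted <%R s -> a \in s -> b \in s -> (index a s < index b s)%N -> a < b.
Proof.
move=> Hs ha hb ab; rewrite -(nth_index 0 ha) -(nth_index 0 hb).
by apply: nth_lt => //; rewrite index_mem.
Qed.

Lemma gapL (R : realType) (s : seq R) (eps : R) :
  sorted <%R s ->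
  (forall i : nat, (0 < i < size s)%N -> eps < (s`_i - s`_i.-1) / 4) ->
  forall a t, a \in s -> t \in s -> a < t -> a + 4 * eps < t.
Proof.
move=> Hs Hg a t ha ht at'.
move: ha ht at' => /(nthP 0) [i iS <-] /(nthP 0) [m mS <-] lt.
have im : (i < m)%N.
  rewrite ltnNge; apply/negP => mi; have := nth_le Hs mi iS; lra.
have m0 : (0 < m)%N := leq_ltn_trans (leq0n i) im.
have := Hg m; rewrite m0 mS => /(_ isT) g.
have : s`_i <= s`_m.-1 by apply: nth_le => //; [rewrite -ltnS prednK | rewrite (leq_ltn_trans (leq_pred m) mS)].
lra.
Qed.

Definition shrink (R : realType) (eps : R) (I : itv R) : itv R :=
  match I with IFin a b => IFin (a + eps) (b - eps) | IInf a => IInf (a + eps) end.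

Lemma shrink_inj (R : realType) (eps : R) : injective (shrink eps).
Proof.
case=> [a b|a] [c d|c] //= [].
- by move=> /addIr -> /addIr ->.
- by move=> /addIr ->.
Qed.

Lemma grow_shrink (R : realType) (eps : R) I : grow eps (shrink eps I) = I.
Proof. by case: I => [a b|a] /=; rewrite ?addrK ?subrK. Qed.

Lemma shrink_grow (R : realType) (eps : R) I : shrink eps (grow eps I) = I.
Proof. by case: I => [a b|a] /=; rewrite ?addrK ?subrK. Qed.

Lemma contains_shrink (R : realType) (eps : R) K I :
  contains (shrink eps K) I = contains K (grow eps I).
Proof.
case: K => [a b|a]; case: I => [p q|p] //=; by rewrite ?lerBrDr ?lerBlDr.
Qed.

Lemma red1 (R : realType) (C : category) (M : smon C) (K : groth M) (Im : images C)
  (F : pmod R C) (s ts : seq R) (eps : R) (I : itv R) :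
  sorted <%R s -> 0 <= eps ->
  (forall i : nat, (0 < i < size s)%N -> eps < (s`_i - s`_i.-1) / 4) ->
  supported (nabla eps (FA K Im F s)) ts ->
  upsum (nabla eps (FA K Im F s)) ts I =
  \sum_(J <- cands s | contains J (grow eps I)) FA K Im F s J.
Proof.
move=> Hs e0 Hg S1; rewrite /upsum.
rewrite (@sum_supp _ _ _ _ [seq shrink eps J | J <- cands s]); first last.
- move=> x nz; apply/andP; split.
  + have /andP [] := S1 x nz; case: x nz => [a b|a] _ /= _.
      by case/andP => ha hb; rewrite mem_candsF ha hb.
    by rewrite mem_candsI.
  + move: nz; rewrite /nabla; case: ifP => [_ nz|]; last by rewrite eqxx.
    rewrite -(shrink_grow eps x); apply: map_f.
    case: (grow eps x) nz => [a b|a].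
      by case/FA_nzF/and3P => ha hb _; rewrite mem_candsF ha hb.
    by move/FA_nzI; rewrite mem_candsI.
- rewrite map_inj_uniq ?uniq_cands //; exact: shrink_inj.
- exact: uniq_cands.
rewrite big_map; apply: eq_big => [K0|K0 _]; first by rewrite contains_shrink.
rewrite /nabla grow_shrink; case: ifP => // nv.
case: K0 nv => [a b|a] //= nv.
case: (eqVneq (FA K Im F s (IFin a b)) 0) => // /FA_nzF /and3P [ha hb hab].
move/negbT: nv; rewrite -leNgt => nv.
have g := gapL Hs Hg ha hb (index_lt Hs ha hb hab); exfalso; lra.
Qed.

Lemma red2 (R : realType) (C : category) (M : smon C) (K : groth M) (Im : images C)
  (G : pmod R C) (T ts : seq R) (I : itv R) :
  supported (FA K Im G T) ts ->
  upsum (FA K Im G T) ts I = \sum_(J <- cands T | contains J I) FA K Im G T J.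
Proof.
move=> S2; rewrite /upsum; apply: sum_supp; try exact: uniq_cands.
move=> x nz; have /andP [_ ] := S2 x nz.
case: x nz => [a b|a] /=.
- by case/FA_nzF/and3P => ha hb _ /andP [ha' hb']; rewrite !mem_candsF ha hb ha' hb'.
- by move/FA_nzI => ha ha'; rewrite !mem_candsI ha ha'.
Qed.

Theorem theorem8p1 (R : realType) (C : category) (M : smon C) (Im : images C)
    (Cc : concrete Im) (K : groth M) (F : pmod R C) (s : seq R) :
  constructible M F s ->
  forall (G : pmod R C) (T : seq R) (eps : R),
    constructible M G T ->
    dI_eq F G eps ->
    (forall i : nat, (0 < i < size s)%N -> eps < (s`_i - s`_i.-1) / 4) ->
    pdgm_hom (nabla eps (FA K Im F s)) (FA K Im G T).
Proof.
move=> HF G T eps HG [e0 [phi [psi [nat1 nat2 c1 c2]]] _] Hg.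
have [snF HsF _ _ _] := HF; have [snG HsG _ _ _] := HG.
split.
- exists ([seq x + eps | x <- s] ++ [seq x - eps | x <- s]).
  case=> [p q|p] nz.
  + have vI : valid (IFin p q) by move: nz; rewrite /nabla; case: ifP => //; rewrite eqxx.
    rewrite vI /=; move: nz; rewrite /nabla vI => /FA_nzF /and3P [ha hb _].
    rewrite !mem_cat; apply/andP; split; apply/orP.
    * by left; apply/mapP; exists (p - eps) => //; rewrite subrK.
    * by right; apply/mapP; exists (q + eps) => //; rewrite addrK.
  + move: nz; rewrite /nabla /= => /FA_nzI ha.
    rewrite mem_cat; apply/orP; left; apply/mapP; exists (p - eps) => //; by rewrite subrK.
- exists T; case=> [a b|a] nz.
  + have /and3P [ha hb hab] := FA_nzF nz.
    by rewrite /= ha hb (index_lt HsG ha hb hab).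
  + by have := FA_nzI nz; rewrite /= => ->.
- move=> ts S1 S2 I vI nz.
  suff E : upsum (nabla eps (FA K Im F s)) ts I = upsum (FA K Im G T) ts I.
    by exists (munit M); rewrite E subrr cls_unit.
  rewrite red1 // red2 //.
  set m0 := Num.min (sp s 0) (sp T 0 - eps).
  have m1 : m0 <= sp s 0 by rewrite ge_min lexx.
  have m2 : m0 <= sp T 0 - eps by rewrite ge_min lexx orbT.
  set u0 := m0 - eps - eps - 1.
  have hs0 : forall t, t \in s -> sp s 0 < t.
    by move=> t ts'; have := head_le HsF ts'; rewrite sp0E; lra.
  have cellu : forall t, t \in s -> u0 < t -> u0 + eps + eps < t.
    by move=> t ts' _; have := hs0 t ts'; rewrite /u0; lra.
  have hu0 : u0 <= u0 + eps + eps by lra.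
  have Iu0 : is_iso (Fm F hu0) by apply: (cell_iso HF).
  case: I vI nz => [p q|p] vI nz.
  + move: nz; rewrite /nabla vI => /FA_nzF /and3P [ha hb hab].
    have pq : p < q := vI.
    rewrite /= upsum_fin //; last by lra.
    rewrite upsum_fin //.
    set a := p - eps in ha hab *; set b := q + eps in hb hab *.
    have ab := index_lt HsF ha hb hab.
    have gab := gapL HsF Hg ha hb ab.
    have ua : u0 <= a by have := hs0 a ha; rewrite /u0; lra.
    have u0s : u0 <= sp s 0 by rewrite /u0; lra.
    have [LF [LFb HLF]] := @KG _ _ _ K Im Cc F s a b u0 HF ab u0s ua.
    have u1 : u0 + eps <= sp T 0 by rewrite /u0; lra.
    have u2 : u0 + eps <= p by move: ua; rewrite /a; lra.
    have [LG [LGq HLG]] := @KG _ _ _ K Im Cc G T p q (u0 + eps) HG pq u1 u2.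
    set ib := index b s.
    have ibS : (ib < size s)%N by rewrite index_mem.
    have ib0 : (0 < ib)%N := leq_ltn_trans (leq0n _) hab.
    have sib : s`_ib = b by rewrite nth_index.
    have gb : eps < (s`_ib - s`_ib.-1) / 4 by apply: Hg; rewrite ib0 ibS.
    rewrite sib in gb.
    set Y := Num.max (Num.max (LF - eps - eps) (LG - eps)) (Num.max (a + eps + eps) s`_ib.-1).
    have Y1 : LF - eps - eps <= Y by rewrite !le_max lexx.
    have Y2 : LG - eps <= Y by rewrite !le_max lexx !orbT.
    have Y3 : a + eps + eps <= Y by rewrite !le_max lexx !orbT.
    have Y4 : s`_ib.-1 <= Y by rewrite !le_max lexx !orbT.
    have Yb : Y + eps + eps < b.
      have : Y < b - eps - eps.
        have hbq : b = q + eps by [].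
        rewrite !gt_max; apply/andP; split; apply/andP; split; lra.
      lra.
    have cellY : forall t, t \in s -> Y < t -> Y + eps + eps < t.
      move=> t /(nthP 0) [m mS <-] Yt.
      case: (ltnP m ib) => mib.
        have : s`_m <= s`_ib.-1 by apply: nth_le => //; rewrite ?(leq_ltn_trans (leq_pred _) ibS) // -ltnS prednK.
        lra.
      have := nth_le HsF mib mS; rewrite sib; lra.
    have ha2 : a <= a + eps + eps by lra.
    have hY2 : Y <= Y + eps + eps by lra.
    have Ia : is_iso (Fm F ha2).
      apply: (cell_iso HF) => t ts' at'; have := gapL HsF Hg ha ts' at'; lra.
    have IY : is_iso (Fm F hY2) by apply: (cell_iso HF).
    have yF1 : LF <= Y + eps + eps by lra.
    have yG1 : LG <= Y + eps by lra.
    have yG2 : Y + eps < q by have hbq : b = q + eps by []; lra.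
    rewrite (HLF (Y + eps + eps) yF1 Yb) (HLG (Y + eps) yG1 yG2).
    rewrite (@clsim_core _ _ _ K Im Cc F G eps phi psi nat1 c1 c2 a Y ha2 hY2 Y3 Ia IY).
    rewrite (@clsim_core _ _ _ K Im Cc F G eps phi psi nat1 c1 c2 u0 Y hu0 hY2 _ Iu0 IY); last by lra.
    by rewrite /a subrK.
  + move: nz; rewrite /nabla /= => /FA_nzI ha.
    rewrite /= upsum_inf // upsum_inf //.
    set a := p - eps in ha *.
    have ua : u0 <= a by have := hs0 a ha; rewrite /u0; lra.
    have u0s : u0 <= sp s 0 by rewrite /u0; lra.
    have [LF HLF] := @KGI _ _ _ K Im Cc F s a u0 HF u0s ua.
    have u1 : u0 + eps <= sp T 0 by rewrite /u0; lra.
    have u2 : u0 + eps <= p by move: ua; rewrite /a; lra.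
    have [LG HLG] := @KGI _ _ _ K Im Cc G T p (u0 + eps) HG u1 u2.
    set Y := Num.max (Num.max LF LG) (Num.max (a + eps + eps) (last 0 s)).
    have Y1 : LF <= Y by rewrite !le_max lexx.
    have Y2 : LG <= Y by rewrite !le_max lexx !orbT.
    have Y3 : a + eps + eps <= Y by rewrite !le_max lexx !orbT.
    have Y4 : last 0 s <= Y by rewrite !le_max lexx !orbT.
    have cellY : forall t, t \in s -> Y < t -> Y + eps + eps < t.
      by move=> t /(sorted_mem_le_last HsF) tl Yt; exfalso; lra.
    have ha2 : a <= a + eps + eps by lra.
    have hY2 : Y <= Y + eps + eps by lra.
    have Ia : is_iso (Fm F ha2).
      apply: (cell_iso HF) => t ts' at'; have := gapL HsF Hg ha ts' at'; lra.
    have IY : is_iso (Fm F hY2) by apply: (cell_iso HF).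
    have yF1 : LF <= Y + eps + eps by lra.
    have yG1 : LG <= Y + eps by lra.
    rewrite (HLF (Y + eps + eps) yF1) (HLG (Y + eps) yG1).
    rewrite (@clsim_core _ _ _ K Im Cc F G eps phi psi nat1 c1 c2 a Y ha2 hY2 Y3 Ia IY).
    rewrite (@clsim_core _ _ _ K Im Cc F G eps phi psi nat1 c1 c2 u0 Y hu0 hY2 _ Iu0 IY); last by lra.
    by rewrite /a subrK.
Qed.
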